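(* Let $f$ be as in the setting below and satisfy condition (i); fix $m\in\mathbb N$, $\bar p\in[0,1]^{g_f^m}$, $\epsilon>0$ and $0<s\le1$. Suppose there are a strictly increasing sequence $(M_k)_{k=1}^\infty$ of natural numbers and $0\le c<1$ such that \[ N^s_\infty\big([0,1)\cap G^{f,m}_{\bar p}(M_k,\epsilon)\big)<\frac{c}{K_f^s}\quad\text{for all }k. \] Then for each cylinder $C\subset[0,1)$ of $f$ there is $K_C$ such that $N^s_\infty\big(C\cap G^{f,m}_{\bar p}(M_k,\epsilon/2)\big)<c|C|^s$ for all $k>K_C$.
   Context: Setting: $f\colon[0,1)\to[0,1)$ and $g_f\ge 2$ is an integer such that $[0,1)$ is partitioned into $g_f$ half-open intervals $[a,b)$, enumerated as $[0],\dots,[g_f-1]$, such that on each of them $f$ is monotone and maps onto $[0,1)$, and $|f(x)-f(y)|\ge |x-y|$ for all $x,y$ in the same interval. For a word $x_1\dots x_n$ over $\{0,\dots,g_f-1\}$ the generation-$n$ cylinder is $C_{x_1\dots x_n}=\{x\in[0,1): f^{i-1}(x)\in[x_i],\ i=1,\dots,n\}$; $[0,1)$ is the generation-$0$ cylinder. It is assumed that $|C_{x_1\dots x_n}|\to 0$ as $n\to\infty$ for every $(x_i)\in\{0,\dots,g_f-1\}^{\mathbb N}$, so each $x\in[0,1)$ has a unique coding sequence $(x_i)_{i\ge1}$ (its $f$-expansion). Condition (i) (bounded distortion): there is $K_f>0$ such that for every cylinder $C_{x_1\dots x_n}$ (including $[0,1)$), $|(f^n)'(y)|/|(f^n)'(z)|<K_f$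 for all $y,z\in C_{x_1\dots x_n}$. Frequencies: enumerate the words of length $m$ as $w_1,\dots,w_{g_f^m}$; for $n>m$, $\tau^f_w(x,n)=\#\{i\in\{1,\dots,n-m\}: x_i\dots x_{i+m-1}=w\}$, and $G^{f,m}_{\bar p}(n,\epsilon)=\{x\in[0,1): p_{w_j}-\epsilon<\tau^f_{w_j}(x,n)/(n-m)<p_{w_j}+\epsilon\ \forall j\}$ (a union of generation-$n$ cylinders). $N^s_\infty(F)=\inf\{\sum_i |C_i|^s: F\subset\bigcup_i C_i\}$, the infimum over countable covers by cylinders of $f$. *)

(* Defs.v *)
From Stdlib Require Import Reals Lra Lia List Arith ClassicalEpsilon.
Import ListNotations.
Open Scope R_scope.

Definition is_glb_R (S : R -> Prop) (v : R) : Prop :=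
  (forall t, S t -> v <= t) /\ (forall u, (forall t, S t -> u <= t) -> u <= v).

(** Diameter |A| = sup { |x - y| : x, y in A } (A nonempty bounded; otherwise
    an unspecified value). For cylinders (intervals) this is their length. *)
Definition diam (A : R -> Prop) : R :=
  epsilon (inhabits 0)
    (is_lub (fun r => exists x y, A x /\ A y /\ r = Rabs (x - y))).

Definition rpow (t s : R) : R :=
  if Rle_dec t 0 then 0 else Rpower t s.

Definition Interval (a : nat -> R) (i : nat) (x : R) : Prop :=
  a i <= x < a (S i).

Definition valid_word (g : nat) (w : list nat) : Prop :=
  forall j, In j w -> (j < g)%nat.

(** Cylinder C_{x_1...x_n} = {x in [0,1) : f^(i-1)(x) in [x_i], i = 1..n}
    (0-indexed here: f^i(x) in [nth i w]). The empty word gives [0,1). *)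
Definition Cyl (a : nat -> R) (f : R -> R) (w : list nat) (x : R) : Prop :=
  0 <= x < 1 /\
  forall i, (i < length w)%nat -> Interval a (nth i w 0%nat) (Nat.iter i f x).

(** The (i+1)-th digit x_{i+1} of the f-expansion of x: the j < g with
    f^i(x) in [j]. *)
Definition digit (a : nat -> R) (g : nat) (f : R -> R) (x : R) (i : nat) : nat :=
  epsilon (inhabits 0%nat)
    (fun j => (j < g)%nat /\ Interval a j (Nat.iter i f x)).

Definition block (a : nat -> R) (g : nat) (f : R -> R) (x : R) (k len : nat)
  : list nat :=
  map (fun t => digit a g f x (k + t)) (seq 0 len).

(** tau_w(x,n) = #{ i in {1..n-m} : x_i ... x_{i+m-1} = w }, m = length w. *)
Definition tau (a : nat -> R) (g : nat) (f : R -> R) (w : list nat) (x : R)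
  (n : nat) : nat :=
  length (filter
    (fun k => if list_eq_dec Nat.eq_dec (block a g f x k (length w)) w
              then true else false)
    (seq 0 (n - length w))).

Definition Gset (a : nat -> R) (g : nat) (f : R -> R) (m : nat)
  (p : list nat -> R) (n : nat) (eps : R) (x : R) : Prop :=
  0 <= x < 1 /\
  forall w, length w = m -> valid_word g w ->
    p w - eps < INR (tau a g f w x n) / INR (n - m) < p w + eps.

(** Countable (finite or infinite) covers by cylinders: a sequence of
    optional words (None = no set). *)
Definition cyl_cover (a : nat -> R) (g : nat) (f : R -> R)
  (F : R -> Prop) (ws : nat -> option (list nat)) : Prop :=
  (forall i w, ws i = Some w -> valid_word g w) /\
  (forall x, F x -> exists i w, ws i = Some w /\ Cyl a f w x).

Definition cover_term (a : nat -> R) (f : R -> R) (s : R)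
  (ws : nat -> option (list nat)) (i : nat) : R :=
  match ws i with
  | None => 0
  | Some w => rpow (diam (Cyl a f w)) s
  end.

Definition Ninf (a : nat -> R) (g : nat) (f : R -> R) (s : R) (F : R -> Prop) : R :=
  epsilon (inhabits 0)
    (is_glb_R (fun t => exists ws, cyl_cover a g f F ws /\
                                   infinite_sum (cover_term a f s ws) t)).

Definition HasDerivWithin (S : R -> Prop) (h : R -> R) (x l : R) : Prop :=
  forall e, 0 < e -> exists d, 0 < d /\
    forall t, t <> 0 -> Rabs t < d -> S (x + t) ->
      Rabs ((h (x + t) - h x) / t - l) < e.

Definition setting (a : nat -> R) (g : nat) (f : R -> R) : Prop :=
  (2 <= g)%nat /\
  a 0%nat = 0 /\ a g = 1 /\ (forall i, (i < g)%nat -> a i < a (S i)) /\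
  (forall x, 0 <= x < 1 -> 0 <= f x < 1) /\
  (forall i, (i < g)%nat ->
     ((forall x y, Interval a i x -> Interval a i y -> x <= y -> f x <= f y) \/
      (forall x y, Interval a i x -> Interval a i y -> x <= y -> f y <= f x))) /\
  (forall i y, (i < g)%nat -> 0 <= y < 1 -> exists x, Interval a i x /\ f x = y) /\
  (forall i x y, (i < g)%nat -> Interval a i x -> Interval a i y ->
     Rabs (x - y) <= Rabs (f x - f y)) /\
  (forall xs : nat -> nat, (forall i, (xs i < g)%nat) ->
     forall e, 0 < e -> exists N, forall n, (N <= n)%nat ->
       diam (Cyl a f (map xs (seq 0 n))) < e).

Definition bounded_distortion (a : nat -> R) (g : nat) (f : R -> R) (K : R) : Prop :=
  forall w, valid_word g w ->
    forall y z, Cyl a f w y -> Cyl a f w z ->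
      exists dy dz,
        HasDerivWithin (Cyl a f w) (Nat.iter (length w) f) y dy /\
        HasDerivWithin (Cyl a f w) (Nat.iter (length w) f) z dz /\
        Rabs dy < K * Rabs dz.

(* Main.v *)
Require Import Defs.
From Stdlib Require Import Reals Lra Lia List Arith ClassicalEpsilon Classical ZArith.
Import ListNotations.
Open Scope R_scope.

Section S.
Variables (a : nat -> R) (g : nat) (f : R -> R).
Hypothesis Hset : setting a g f.

Lemma a_lo : forall i, (i <= g)%nat -> 0 <= a i.
Proof.
  destruct Hset as [_ [H0 [_ [Hinc _]]]].
  induction i; intros Hi. lra.
  assert (a i < a (S i)) by (apply Hinc; lia). specialize (IHi ltac:(lia)). lra.
Qed.

Lemma a_hi : forall i, (i <= g)%nat -> a i <= 1.
Proof.
  destruct Hset as [_ [_ [H1 [Hinc _]]]].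
  intros i Hi. remember (g - i)%nat as k. revert i Hi Heqk.
  induction k; intros i Hi Hk.
  - assert (i = g) by lia. subst. lra.
  - assert (a i < a (S i)) by (apply Hinc; lia). specialize (IHk (S i) ltac:(lia) ltac:(lia)). lra.
Qed.

Lemma Int_unit : forall j x, (j < g)%nat -> Interval a j x -> 0 <= x < 1.
Proof.
  intros j x Hj [H1 H2]. pose proof (a_lo j ltac:(lia)). pose proof (a_hi (S j) ltac:(lia)).
  split; lra.
Qed.

Lemma f_unit : forall x, 0 <= x < 1 -> 0 <= f x < 1.
Proof. destruct Hset as [_ [_ [_ [_ [H _]]]]]. exact H. Qed.

Lemma iter_unit : forall n x, 0 <= x < 1 -> 0 <= Nat.iter n f x < 1.
Proof. induction n; intros x Hx; simpl. auto. apply f_unit; auto. Qed.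

Lemma Cyl_nil : forall x, Cyl a f [] x <-> 0 <= x < 1.
Proof.
  intros x; unfold Cyl; split. tauto. intros H; split; auto. intros i Hi; simpl in Hi; lia.
Qed.

Lemma Cyl_cons : forall j w x,
  Cyl a f (j :: w) x <-> (0 <= x < 1 /\ Interval a j x /\ Cyl a f w (f x)).
Proof.
  intros j w x; unfold Cyl; split.
  - intros [Hx H]. split; auto. split.
    + apply (H 0%nat); simpl; lia.
    + split. apply f_unit; auto. intros i Hi.
      specialize (H (S i) ltac:(simpl; lia)). change (nth (S i) (j::w) 0%nat) with (nth i w 0%nat) in H. rewrite Nat.iter_succ_r in H. exact H.
  - intros [Hx [Hj [Hfx H]]]. split; auto. intros i Hi. destruct i. simpl. auto.
    change (nth (S i) (j::w) 0%nat) with (nth i w 0%nat). rewrite Nat.iter_succ_r. apply H. simpl in Hi; lia.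
Qed.

Lemma Cyl_unit : forall w x, Cyl a f w x -> 0 <= x < 1.
Proof. intros w x H; apply H. Qed.

Lemma Cyl_app : forall w v x,
  Cyl a f (w ++ v) x <-> (Cyl a f w x /\ Cyl a f v (Nat.iter (length w) f x)).
Proof.
  induction w as [|j w IH]; intros v x.
  - rewrite app_nil_l, Cyl_nil. simpl Nat.iter. split. intros H; split; auto. apply (Cyl_unit v x H). tauto.
  - rewrite <- app_comm_cons, !Cyl_cons, IH. change (length (j::w)) with (S (length w)). rewrite Nat.iter_succ_r. tauto.
Qed.


Lemma Cyl_surj : forall w, valid_word g w -> forall y, 0 <= y < 1 ->
  exists x, Cyl a f w x /\ Nat.iter (length w) f x = y.
Proof.
  destruct Hset as [_ [_ [_ [_ [_ [_ [Hon _]]]]]]].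
  induction w as [|j w IH]; intros Hv y Hy.
  - exists y. split. apply Cyl_nil; auto. reflexivity.
  - assert (Hj : (j < g)%nat) by (apply Hv; simpl; auto).
    assert (Hv' : valid_word g w) by (intros k Hk; apply Hv; simpl; auto).
    destruct (IH Hv' y Hy) as [x' [Hx' Hx'y]].
    destruct (Hon j x' Hj (Cyl_unit _ _ Hx')) as [x [Hxj Hfx]].
    exists x. split.
    + apply Cyl_cons. split. apply (Int_unit j); auto. split; auto. rewrite Hfx; auto.
    + simpl length. rewrite Nat.iter_succ_r, Hfx. auto.
Qed.

Lemma Cyl_convex : forall w, valid_word g w -> forall x y z,
  Cyl a f w x -> Cyl a f w y -> x <= z <= y -> Cyl a f w z.
Proof.
  destruct Hset as [_ [_ [_ [_ [_ [Hmono _]]]]]].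
  induction w as [|j w IH]; intros Hv x y z Hx Hy Hz.
  - apply Cyl_nil. apply Cyl_nil in Hx, Hy. lra.
  - assert (Hj : (j < g)%nat) by (apply Hv; simpl; auto).
    assert (Hv' : valid_word g w) by (intros k Hk; apply Hv; simpl; auto).
    apply Cyl_cons in Hx, Hy. destruct Hx as [Hx0 [Hxj Hxf]]. destruct Hy as [Hy0 [Hyj Hyf]].
    assert (Hzj : Interval a j z) by (destruct Hxj, Hyj; split; lra).
    apply Cyl_cons. split. apply (Int_unit j); auto. split; auto.
    destruct (Hmono j Hj) as [M|M].
    + apply (IH Hv' (f x) (f y)); auto. split; apply M; auto; lra.
    + apply (IH Hv' (f y) (f x)); auto. split; apply M; auto; lra.
Qed.

End S.

Lemma diam_lub : forall A : R -> Prop, (exists x, A x) -> (forall x, A x -> 0 <= x < 1) ->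
  is_lub (fun r => exists x y, A x /\ A y /\ r = Rabs (x - y)) (diam A).
Proof.
  intros A [x0 Hx0] HA. unfold diam. apply epsilon_spec.
  destruct (completeness (fun r => exists x y, A x /\ A y /\ r = Rabs (x - y))) as [l Hl].
  - exists 1. intros r [x [y [Hx [Hy ->]]]]. apply HA in Hx. apply HA in Hy.
    unfold Rabs; destruct Rcase_abs; lra.
  - exists (Rabs (x0 - x0)). exists x0, x0. auto.
  - exists l; auto.
Qed.

Lemma diam_ub : forall A : R -> Prop, (forall x, A x -> 0 <= x < 1) ->
  forall x y, A x -> A y -> Rabs (x - y) <= diam A.
Proof.
  intros A HA x y Hx Hy. destruct (diam_lub A (ex_intro _ x Hx) HA) as [H _].
  apply H. exists x, y. auto.
Qed.

Lemma diam_le : forall A : R -> Prop, (exists x, A x) -> (forall x, A x -> 0 <= x < 1) ->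
  forall B, (forall x y, A x -> A y -> Rabs (x - y) <= B) -> diam A <= B.
Proof.
  intros A Hne HA B HB. destruct (diam_lub A Hne HA) as [_ H].
  apply H. intros r [x [y [Hx [Hy ->]]]]. auto.
Qed.

Lemma diam_nonneg : forall A : R -> Prop, (exists x, A x) -> (forall x, A x -> 0 <= x < 1) ->
  0 <= diam A.
Proof.
  intros A [x Hx] HA. replace 0 with (Rabs (x - x)) by (rewrite Rminus_diag; apply Rabs_R0).
  apply diam_ub; auto.
Qed.

Lemma rpow_nonneg : forall t s, 0 <= rpow t s.
Proof. intros t s; unfold rpow; destruct Rle_dec. lra. left; unfold Rpower; apply exp_pos. Qed.

Lemma rpow_pos : forall t s, 0 < t -> 0 < rpow t s.
Proof. intros t s H; unfold rpow; destruct Rle_dec. lra. unfold Rpower; apply exp_pos. Qed.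

Lemma rpow_mono : forall x y s, 0 <= s -> 0 <= x <= y -> rpow x s <= rpow y s.
Proof.
  intros x y s Hs Hxy; unfold rpow. destruct (Rle_dec x 0); destruct (Rle_dec y 0).
  lra. left; unfold Rpower; apply exp_pos. lra. apply Rle_Rpower_l; lra.
Qed.

Lemma rpow_mult : forall x y s, 0 < x -> 0 < y -> rpow (x * y) s = rpow x s * rpow y s.
Proof.
  intros x y s Hx Hy; unfold rpow. destruct (Rle_dec (x*y) 0). nra.
  destruct (Rle_dec x 0). lra. destruct (Rle_dec y 0). lra.
  rewrite Rpower_mult_distr; auto.
Qed.

Lemma deriv_bound : forall S h c l, HasDerivWithin S h c l ->
  exists d, 0 < d /\ forall t, Rabs t < d -> S (c + t) -> Rabs (h (c + t) - h c) <= (Rabs l + 1) * Rabs t.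
Proof.
  intros S h c l H. destruct (H 1 Rlt_0_1) as [d [Hd Hd']]. exists d; split; auto.
  intros t Ht HS. destruct (Req_dec t 0) as [->|Ht0].
  - rewrite Rplus_0_r, Rminus_diag, !Rabs_R0. lra.
  - specialize (Hd' t Ht0 Ht HS).
    replace (h (c + t) - h c) with (((h (c + t) - h c) / t - l + l) * t) by (field; auto).
    rewrite Rabs_mult. apply Rmult_le_compat_r. apply Rabs_pos.
    pose proof (Rabs_triang ((h (c + t) - h c) / t - l) l). lra.
Qed.

Lemma deriv_unique : forall (S : R -> Prop) h a b c l1 l2,
  (forall x y z, S x -> S y -> x <= z <= y -> S z) -> S a -> S b -> a < c < b ->
  HasDerivWithin S h c l1 -> HasDerivWithin S h c l2 -> l1 = l2.
Proof.
  intros S h a b c l1 l2 Hconv Ha Hb Hc H1 H2.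
  destruct (Req_dec l1 l2) as [E|NE]; auto. exfalso.
  set (e := Rabs (l1 - l2) / 2).
  assert (He : 0 < e) by (unfold e; assert (0 < Rabs (l1 - l2)) by (apply Rabs_pos_lt; lra); lra).
  destruct (H1 e He) as [d1 [Hd1 H1']]. destruct (H2 e He) as [d2 [Hd2 H2']].
  set (t := Rmin (Rmin d1 d2) (Rmin (c - a) (b - c)) / 2).
  assert (Ht : 0 < t). { unfold t. repeat apply Rmin_case; lra. }
  assert (Htd1 : t < d1). { unfold t. assert (Rmin (Rmin d1 d2) (Rmin (c - a) (b - c)) <= d1).
    { eapply Rle_trans; [apply Rmin_l|apply Rmin_l]. } lra. }
  assert (Htd2 : t < d2). { unfold t. assert (Rmin (Rmin d1 d2) (Rmin (c - a) (b - c)) <= d2).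
    { eapply Rle_trans; [apply Rmin_l|apply Rmin_r]. } lra. }
  assert (Htb : t < b - c). { unfold t. assert (Rmin (Rmin d1 d2) (Rmin (c - a) (b - c)) <= b - c).
    { eapply Rle_trans; [apply Rmin_r|apply Rmin_r]. } lra. }
  assert (HS : S (c + t)) by (apply (Hconv a b); auto; lra).
  assert (Hta : Rabs t = t) by (apply Rabs_right; lra).
  specialize (H1' t ltac:(lra) ltac:(lra) HS). specialize (H2' t ltac:(lra) ltac:(lra) HS).
  set (q := (h (c + t) - h c) / t) in *.
  assert (Rabs (l1 - l2) <= Rabs (q - l1) + Rabs (q - l2)).
  { replace (l1 - l2) with (- (q - l1) + (q - l2)) by ring.
    eapply Rle_trans. apply Rabs_triang. rewrite Rabs_Ropp. lra. }
  unfold e in *. lra.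
Qed.

Definition clamp (a b t : R) := Rmin (Rmax t a) b.

Lemma clamp_in : forall a b t, a <= b -> a <= clamp a b t <= b.
Proof. intros; unfold clamp, Rmin, Rmax; repeat destruct Rle_dec; lra. Qed.

Lemma clamp_id : forall a b t, a <= t <= b -> clamp a b t = t.
Proof. intros; unfold clamp, Rmin, Rmax; repeat destruct Rle_dec; lra. Qed.

Lemma clamp_close : forall a b t c, a <= c <= b -> Rabs (clamp a b t - c) <= Rabs (t - c).
Proof.
  intros; unfold clamp, Rmin, Rmax; repeat destruct Rle_dec; unfold Rabs; repeat destruct Rcase_abs; lra.
Qed.

Lemma mvt_within : forall (S : R -> Prop) h,
  (forall x y z, S x -> S y -> x <= z <= y -> S z) ->
  (forall x, S x -> exists l, HasDerivWithin S h x l) ->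
  forall a b, S a -> S b -> a < b ->
  exists c, a < c < b /\ forall l, HasDerivWithin S h c l -> h b - h a = l * (b - a).
Proof.
  intros S h Hconv Hder a b Ha Hb Hab.
  set (D := fun x => epsilon (inhabits 0) (fun l => HasDerivWithin S h x l)).
  assert (HD : forall x, S x -> HasDerivWithin S h x (D x)).
  { intros x Hx. unfold D. apply epsilon_spec. auto. }
  set (ht := fun t => h (clamp a b t)).
  assert (Hlim : forall c, a < c < b -> derivable_pt_lim ht c (D c)).
  { intros c Hc eps Heps.
    assert (Sc : S c) by (apply (Hconv a b); auto; lra).
    destruct (HD c Sc eps Heps) as [d [Hd H]].
    assert (Hdel : 0 < Rmin d (Rmin (c - a) (b - c))) by (repeat apply Rmin_case; lra).
    exists (mkposreal _ Hdel). simpl. intros t Ht0 Ht.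
    assert (H1 : Rabs t < d) by (eapply Rlt_le_trans; [exact Ht| apply Rmin_l]).
    assert (H2 : Rabs t < Rmin (c - a) (b - c)) by (eapply Rlt_le_trans; [exact Ht| apply Rmin_r]).
    assert (H3 : Rmin (c - a) (b - c) <= c - a) by apply Rmin_l.
    assert (H4 : Rmin (c - a) (b - c) <= b - c) by apply Rmin_r.
    assert (Ht' : - (Rabs t) <= t <= Rabs t) by (unfold Rabs; destruct Rcase_abs; lra).
    unfold ht. rewrite !clamp_id by lra.
    apply H; auto. apply (Hconv a b); auto; lra. }
  assert (Hcont : forall c, a <= c <= b -> continuity_pt ht c).
  { intros c Hc eps Heps.
    assert (Sc : S c) by (apply (Hconv a b); auto; lra).
    destruct (deriv_bound S h c (D c) (HD c Sc)) as [d [Hd Hb']].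
    set (K := Rabs (D c) + 1).
    assert (HK : 0 < K) by (unfold K; pose proof (Rabs_pos (D c)); lra).
    exists (Rmin d (eps / K)). split. apply Rmin_case; auto. apply Rdiv_lt_0_compat; auto.
    intros z [_ Hz]. simpl in *. unfold Rdist in *. unfold ht.
    rewrite (clamp_id a b c) by lra.
    pose proof (clamp_close a b z c Hc) as Hcl.
    pose proof (clamp_in a b z ltac:(lra)) as Hci.
    assert (Hz1 : Rabs (z - c) < d) by (eapply Rlt_le_trans; [exact Hz| apply Rmin_l]).
    assert (Hz2 : Rabs (z - c) < eps / K) by (eapply Rlt_le_trans; [exact Hz| apply Rmin_r]).
    specialize (Hb' (clamp a b z - c) ltac:(lra)).
    replace (c + (clamp a b z - c)) with (clamp a b z) in Hb' by ring.
    specialize (Hb' (Hconv a b _ Ha Hb Hci)). fold K in Hb'.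
    eapply Rle_lt_trans. exact Hb'.
    apply Rle_lt_trans with (K * Rabs (z - c)). apply Rmult_le_compat_l; lra.
    replace eps with (K * (eps / K)) by (field; lra). apply Rmult_lt_compat_l; auto. }
  set (pr1 := fun c (P : a < c < b) => exist (fun l => derivable_pt_lim ht c l) (D c) (Hlim c P)).
  destruct (MVT ht id a b pr1 (fun c _ => derivable_pt_id c) Hab Hcont
    (fun c _ => derivable_continuous_pt _ _ (derivable_pt_id c))) as [c [P Hc]].
  exists c. split; auto. intros l Hl.
  assert (Sc : S c) by (apply (Hconv a b); auto; lra).
  rewrite (deriv_unique S h a b c l (D c) Hconv Ha Hb P Hl (HD c Sc)).
  rewrite derive_pt_id in Hc. unfold pr1 in Hc. simpl in Hc. unfold ht, id in Hc.
  rewrite !clamp_id in Hc by lra. lra.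
Qed.

Lemma valid_app : forall g w v, valid_word g w -> valid_word g v -> valid_word g (w ++ v).
Proof. intros g w v Hw Hv j Hj. apply in_app_or in Hj. destruct Hj; auto. Qed.

Lemma mvt_sym : forall (S : R -> Prop) h,
  (forall x y z, S x -> S y -> x <= z <= y -> S z) ->
  (forall x, S x -> exists l, HasDerivWithin S h x l) ->
  forall a b, S a -> S b -> a <> b ->
  exists c, S c /\ forall l, HasDerivWithin S h c l -> Rabs (h b - h a) = Rabs l * Rabs (b - a).
Proof.
  intros S h Hc Hd a b Ha Hb Hab.
  destruct (Rlt_or_le a b) as [Hlt|Hle].
  - destruct (mvt_within S h Hc Hd a b Ha Hb Hlt) as [c [Hc1 Hc2]].
    exists c. split. apply (Hc a b); auto; lra.
    intros l Hl. rewrite (Hc2 l Hl), Rabs_mult. auto.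
  - destruct (mvt_within S h Hc Hd b a Hb Ha ltac:(lra)) as [c [Hc1 Hc2]].
    exists c. split. apply (Hc b a); auto; lra.
    intros l Hl. rewrite <- Rabs_Ropp, Ropp_minus_distr, (Hc2 l Hl), Rabs_mult.
    rewrite <- (Rabs_Ropp (b - a)), Ropp_minus_distr. auto.
Qed.

Lemma core : forall a g f K, setting a g f -> 0 < K -> bounded_distortion a g f K ->
  forall w v, valid_word g w -> valid_word g v ->
  diam (Cyl a f (w ++ v)) <= K * diam (Cyl a f w) * diam (Cyl a f v).
Proof.
  intros a g f K Hset HK Hdist w v Hw Hv.
  set (S := Cyl a f w). set (h := Nat.iter (length w) f).
  assert (Hconv : forall x y z, S x -> S y -> x <= z <= y -> S z) by (apply Cyl_convex with g; auto).
  assert (Hder : forall x, S x -> exists l, HasDerivWithin S h x l).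
  { intros x Hx. destruct (Hdist w Hw x x Hx Hx) as [dy [dz [H1 _]]]. exists dy; auto. }
  assert (Hwv := valid_app g w v Hw Hv).
  assert (H01 : 0 <= 0 < 1) by lra.
  assert (neT : exists x, Cyl a f (w ++ v) x).
  { destruct (Cyl_surj a g f Hset _ Hwv 0 H01) as [x [Hx _]]. eauto. }
  assert (neS : exists x, S x).
  { destruct (Cyl_surj a g f Hset _ Hw 0 H01) as [x [Hx _]]. eauto. }
  assert (neV : exists x, Cyl a f v x).
  { destruct (Cyl_surj a g f Hset _ Hv 0 H01) as [x [Hx _]]. eauto. }
  assert (dS0 := diam_nonneg S neS (Cyl_unit a f w)).
  assert (dv0 := diam_nonneg _ neV (Cyl_unit a f v)).
  set (dS := diam S) in *. set (dv := diam (Cyl a f v)) in *.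
  set (B := K * dS * dv).
  assert (HB : 0 <= B) by (unfold B; apply Rmult_le_pos; [apply Rmult_le_pos|]; lra).
  assert (Main : forall x y, Cyl a f (w ++ v) x -> Cyl a f (w ++ v) y -> x < y -> y - x <= B).
  { intros x y Hx Hy Hxy. apply Rnot_lt_le. intros Hr.
    set (r := y - x) in *.
    apply (Cyl_app a g f Hset) in Hx, Hy. destruct Hx as [Sx Vx]. destruct Hy as [Sy Vy].
    destruct (mvt_within S h Hconv Hder x y Sx Sy Hxy) as [c1 [Hc1 Hc1']].
    set (v0 := (r + B) / (2 * r)).
    assert (Hv0 : 0 < v0 < 1).
    { unfold v0. split. apply Rdiv_lt_0_compat; lra.
      apply (Rmult_lt_reg_r (2 * r)). lra. unfold Rdiv. rewrite Rmult_assoc, Rinv_l by lra. lra. }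
    assert (Hv0r : v0 * r = (r + B) / 2) by (unfold v0; field; lra).
    destruct (Cyl_surj a g f Hset _ Hw 0 H01) as [u [Su Hu]].
    destruct (Cyl_surj a g f Hset _ Hw v0 ltac:(lra)) as [u' [Su' Hu']].
    fold h in Hu, Hu'.
    assert (Huu : u <> u') by (intros E; subst; lra).
    destruct (mvt_sym S h Hconv Hder u u' Su Su' Huu) as [c2 [Sc2 Hc2]].
    assert (Sc1 : S c1) by (apply (Hconv x y); auto; lra).
    destruct (Hdist w Hw c2 c1 Sc2 Sc1) as [dy [dz [Hdy [Hdz Hlt]]]].
    specialize (Hc1' dz Hdz). specialize (Hc2 dy Hdy).
    rewrite Hu, Hu', Rminus_0_r, Rabs_right in Hc2 by lra.
    assert (E1 : Rabs (h y - h x) <= dv) by (apply diam_ub; auto; apply Cyl_unit).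
    fold r in Hc1'. rewrite Hc1', Rabs_mult, (Rabs_right r) in E1 by lra.
    assert (E2 : Rabs (u' - u) <= dS) by (apply diam_ub; auto; apply Cyl_unit).
    assert (E3 : v0 <= Rabs dy * dS) by (rewrite Hc2; apply Rmult_le_compat_l; auto; apply Rabs_pos).
    assert (E4 : Rabs dy * dS <= K * Rabs dz * dS) by (apply Rmult_le_compat_r; lra).
    assert (E5 : v0 * r <= K * dS * (Rabs dz * r)).
    { apply Rle_trans with (K * Rabs dz * dS * r). apply Rmult_le_compat_r; lra. right; ring. }
    assert (E6 : K * dS * (Rabs dz * r) <= B).
    { unfold B. apply Rmult_le_compat_l; auto. apply Rmult_le_pos; lra. }
    lra. }
  apply diam_le; auto. apply Cyl_unit.
  intros x y Hx Hy. destruct (Rtotal_order x y) as [H|[H|H]].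
  - rewrite Rabs_minus_sym, Rabs_right by lra. auto.
  - subst. rewrite Rminus_diag, Rabs_R0. auto.
  - rewrite Rabs_right by lra. auto.
Qed.

Lemma nat_above : forall r, exists N : nat, r < INR N.
Proof.
  intros r. destruct (archimed r) as [H _].
  destruct (Z_le_gt_dec 0 (up r)) as [Hz|Hz].
  - exists (Z.to_nat (up r) + 1)%nat. rewrite plus_INR, INR_IZR_INZ, Z2Nat.id by auto. simpl. lra.
  - exists 0%nat. simpl. apply Z.gt_lt in Hz. apply IZR_lt in Hz. lra.
Qed.

Lemma block_shift : forall a g f n y k len,
  block a g f (Nat.iter n f y) k len = block a g f y (n + k) len.
Proof.
  intros. unfold block. apply map_ext. intros t. unfold digit.
  rewrite <- Nat.iter_add. replace (k + t + n)%nat with (n + k + t)%nat by lia. reflexivity.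
Qed.

Lemma filter_shift : forall (P : nat -> bool) n L st,
  length (filter (fun k => P (n + k)%nat) (seq st L)) = length (filter P (seq (n + st) L)).
Proof.
  intros P n L. induction L; intros st. reflexivity.
  simpl. destruct (P (n + st)%nat); simpl; rewrite IHL;
  replace (n + S st)%nat with (S (n + st)) by lia; auto.
Qed.

Lemma lf_app : forall (P : nat -> bool) l1 l2,
  length (filter P (l1 ++ l2)) = (length (filter P l1) + length (filter P l2))%nat.
Proof. intros. rewrite filter_app, length_app. auto. Qed.

Lemma tau_shift : forall a g f u y n M,
  (tau a g f u (Nat.iter n f y) M <= tau a g f u y M + n)%nat /\
  (tau a g f u y M <= tau a g f u (Nat.iter n f y) M + n)%nat.
Proof.
  intros. unfold tau.
  set (P := fun k => if list_eq_dec Nat.eq_dec (block a g f y k (length u)) u then true else false).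
  set (L := (M - length u)%nat).
  rewrite (filter_ext _ (fun k => P (n + k)%nat)).
  2:{ intros k. unfold P. rewrite block_shift. reflexivity. }
  rewrite filter_shift. rewrite Nat.add_0_r. fold P.
  pose proof (seq_app n L 0) as E1. pose proof (seq_app L n 0) as E2.
  simpl in E1, E2. replace (L + n)%nat with (n + L)%nat in E2 by lia.
  assert (X1 := f_equal (fun l => length (filter P l)) E1).
  assert (X2 := f_equal (fun l => length (filter P l)) E2).
  simpl in X1, X2. rewrite lf_app in X1, X2.
  pose proof (filter_length_le P (seq 0 n)). pose proof (filter_length_le P (seq L n)).
  rewrite length_seq in *. lia.
Qed.

Definition CS a g f s F t := exists ws, cyl_cover a g f F ws /\ infinite_sum (cover_term a f s ws) t.

Lemma Ninf_glb : forall a g f s F, (exists t, CS a g f s F t) -> (forall t, CS a g f s F t -> 0 <= t) ->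
  is_glb_R (CS a g f s F) (Ninf a g f s F).
Proof.
  intros a g f s F [t0 Ht0] Hpos. unfold Ninf. apply epsilon_spec. fold (CS a g f s F).
  destruct (completeness (fun r => CS a g f s F (- r))) as [l [Hl1 Hl2]].
  - exists 0. intros r Hr. apply Hpos in Hr. lra.
  - exists (- t0). rewrite Ropp_involutive. auto.
  - exists (- l). split.
    + intros t Ht. assert (- t <= l) by (apply Hl1; rewrite Ropp_involutive; auto). lra.
    + intros u Hu. assert (l <= - u).
      { apply Hl2. intros r Hr. apply Hu in Hr. lra. } lra.
Qed.

Lemma cover_term_nonneg : forall a f s ws i, 0 <= cover_term a f s ws i.
Proof. intros. unfold cover_term. destruct (ws i). apply rpow_nonneg. lra. Qed.

Lemma Un_cv_const : forall c, Un_cv (fun _ => c) c.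
Proof. intros c e He. exists 0%nat. intros. unfold Rdist. rewrite Rminus_diag, Rabs_R0. auto. Qed.

Lemma CS_nonneg : forall a g f s F t, CS a g f s F t -> 0 <= t.
Proof.
  intros a g f s F t [ws [_ Hs]].
  apply (@Rle_cv_lim (fun _ => 0) (fun N => sum_f_R0 (cover_term a f s ws) N) 0 t).
  - intros. apply cond_pos_sum. apply cover_term_nonneg.
  - apply Un_cv_const.
  - exact Hs.
Qed.

Lemma CS_trivial : forall a g f s F, (forall x, F x -> 0 <= x < 1) -> exists t, CS a g f s F t.
Proof.
  intros a g f s F HF.
  set (ws := fun i : nat => if Nat.eqb i 0 then Some (@nil nat) else None).
  exists (cover_term a f s ws 0). exists ws. split.
  - split.
    + intros i w H. unfold ws in H. destruct (Nat.eqb i 0); inversion H. intros j Hj; inversion Hj.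
    + intros x Hx. exists 0%nat, nil. split. reflexivity.
      split. apply HF; auto. intros i Hi; simpl in Hi; lia.
  - intros e He. exists 0%nat. intros n _.
    assert (sum_f_R0 (cover_term a f s ws) n = cover_term a f s ws 0).
    { induction n. reflexivity. simpl. rewrite IHn. unfold cover_term at 2. simpl. ring. }
    rewrite H. unfold Rdist. rewrite Rminus_diag, Rabs_R0. auto.
Qed.

Lemma Un_cv_ext : forall U V l, (forall n, U n = V n) -> Un_cv U l -> Un_cv V l.
Proof. intros U V l E H e He. destruct (H e He) as [N HN]. exists N. intros. rewrite <- E. auto. Qed.

Lemma M_ge : forall M : nat -> nat, (forall k, (M k < M (S k))%nat) -> forall k, (k <= M k)%nat.
Proof. intros M HM k. induction k. lia. specialize (HM k). lia. Qed.

Lemma div_le : forall x y L, 0 < L -> x <= y -> x / L <= y / L.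
Proof. intros. unfold Rdiv. apply Rmult_le_compat_r; auto. left; apply Rinv_0_lt_compat; auto. Qed.

Theorem mainTheorem9
  (a : nat -> R) (g : nat) (f : R -> R) (K : R)
  (Hset : setting a g f) (HK : 0 < K) (Hdist : bounded_distortion a g f K)
  (m : nat) (p : list nat -> R)
  (Hp : forall w, length w = m -> valid_word g w -> 0 <= p w <= 1)
  (eps : R) (Heps : 0 < eps) (s : R) (Hs : 0 < s <= 1)
  (M : nat -> nat) (HM : forall k, (M k < M (S k))%nat)
  (c : R) (Hc : 0 <= c < 1)
  (HN : forall k, (m < M k)%nat ->
     Ninf a g f s (fun x => 0 <= x < 1 /\ Gset a g f m p (M k) eps x)
       < c / rpow K s) :
  forall w, valid_word g w ->
    exists KC : nat, forall k, (KC < k)%nat ->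
      Ninf a g f s (fun x => Cyl a f w x /\ Gset a g f m p (M k) (eps / 2) x)
        < c * rpow (diam (Cyl a f w)) s.
Proof.
  intros w Hw. set (n := length w).
  destruct (nat_above (2 * INR n / eps)) as [N HNn].
  exists (m + N)%nat. intros k Hk.
  pose proof (M_ge M HM k) as HMk.
  assert (HmM : (m < M k)%nat) by lia.
  set (L := (M k - m)%nat).
  assert (HLN : (N < L)%nat) by (unfold L; lia).
  assert (HL : 0 < INR L) by (apply lt_0_INR; lia).
  assert (HnL : INR n <= eps / 2 * INR L).
  { apply lt_INR in HLN. assert (2 * INR n / eps * eps <= INR L * eps)
      by (apply Rmult_le_compat_r; lra).
    replace (2 * INR n / eps * eps) with (2 * INR n) in H by (field; lra). nra. }
  set (X := fun x => 0 <= x < 1 /\ Gset a g f m p (M k) eps x).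
  assert (HX := HN k HmM). fold X in HX.
  assert (HglbX : is_glb_R (CS a g f s X) (Ninf a g f s X)).
  { apply Ninf_glb. apply CS_trivial. intros x Hx; apply Hx. apply CS_nonneg. }
  assert (Ht : exists t, CS a g f s X t /\ t < c / rpow K s).
  { apply NNPP. intros Hno. destruct HglbX as [_ Hg].
    assert (c / rpow K s <= Ninf a g f s X).
    { apply Hg. intros t Ht. apply Rnot_lt_le. intros Hlt. apply Hno. eauto. } lra. }
  destruct Ht as [t [[ws [Hcov Hsum]] Htc]].
  assert (H01 : 0 <= 0 < 1) by lra. assert (H12 : 0 <= 1/2 < 1) by lra.
  destruct (Cyl_surj a g f Hset w Hw 0 H01) as [u [Su Hu]].
  destruct (Cyl_surj a g f Hset w Hw (1/2) H12) as [u' [Su' Hu']].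
  assert (HdS : 0 < diam (Cyl a f w)).
  { assert (u <> u') by (intros E; subst; lra).
    apply Rlt_le_trans with (Rabs (u - u')). apply Rabs_pos_lt. lra.
    apply diam_ub; auto. apply Cyl_unit. }
  set (C0 := rpow K s * rpow (diam (Cyl a f w)) s).
  assert (HC0 : 0 < C0) by (apply Rmult_lt_0_compat; apply rpow_pos; auto).
  set (ws' := fun i => match ws i with Some v => Some (w ++ v) | None => None end).
  set (An := cover_term a f s ws').
  set (Bn := fun i => cover_term a f s ws i * C0).
  assert (HAB : forall i, 0 <= An i <= Bn i).
  { intros i. split. apply cover_term_nonneg. unfold An, Bn, cover_term, ws'.
    destruct (ws i) as [v|] eqn:E; [|lra].
    assert (Hv : valid_word g v) by (apply (proj1 Hcov i v E)).
    pose proof (core a g f K Hset HK Hdist w v Hw Hv) as Hcore.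
    assert (neT : exists x, Cyl a f (w ++ v) x).
    { destruct (Cyl_surj a g f Hset _ (valid_app g w v Hw Hv) 0 H01) as [x [Hx _]]. eauto. }
    assert (neV : exists x, Cyl a f v x).
    { destruct (Cyl_surj a g f Hset _ Hv 0 H01) as [x [Hx _]]. eauto. }
    pose proof (diam_nonneg _ neT (Cyl_unit a f _)).
    pose proof (diam_nonneg _ neV (Cyl_unit a f _)).
    destruct (Req_dec (diam (Cyl a f v)) 0) as [Z|NZ].
    - rewrite Z, Rmult_0_r in Hcore. unfold rpow at 1. destruct Rle_dec; [|lra].
      apply Rmult_le_pos. apply rpow_nonneg. lra.
    - unfold C0. eapply Rle_trans. apply rpow_mono. lra. split. auto. exact Hcore.
      rewrite !rpow_mult by (try apply Rmult_lt_0_compat; lra). right; ring. }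
  assert (HBcv : Un_cv (fun N => sum_f_R0 Bn N) (t * C0)).
  { apply (Un_cv_ext (fun N => sum_f_R0 (cover_term a f s ws) N * C0)).
    - intros N'. unfold Bn. rewrite Rmult_comm, scal_sum. reflexivity.
    - apply CV_mult. exact Hsum. apply Un_cv_const. }
  destruct (Rseries_CV_comp An Bn HAB (exist _ _ HBcv)) as [t' Ht'].
  assert (Ht'le : t' <= t * C0).
  { apply (Rle_cv_lim (fun N => sum_growing An Bn N (fun i => proj2 (HAB i))) Ht' HBcv). }
  set (F := fun x => Cyl a f w x /\ Gset a g f m p (M k) (eps / 2) x).
  assert (HCS : CS a g f s F t').
  { exists ws'. split; [split|].
    - intros i w' E. unfold ws' in E. destruct (ws i) as [v|] eqn:E'; inversion E.
      apply valid_app; auto. apply (proj1 Hcov i v E').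
    - intros x [Hx [Hx01 Gx]].
      set (z := Nat.iter n f x).
      assert (Xz : X z).
      { split. apply iter_unit with a g; auto. split. apply iter_unit with a g; auto.
        intros v Hvl Hvv. specialize (Gx v Hvl Hvv). fold L in Gx |- *.
        destruct (tau_shift a g f v x n (M k)) as [T1 T2]. fold z in T1, T2.
        apply le_INR in T1, T2. rewrite plus_INR in T1, T2.
        assert (Q1 := div_le _ _ _ HL T1). assert (Q2 := div_le _ _ _ HL T2).
        unfold Rdiv in Q1, Q2. rewrite Rmult_plus_distr_r in Q1, Q2.
        assert (Q3 : INR n * / INR L <= eps / 2).
        { replace (eps / 2) with (eps / 2 * INR L * / INR L) by (field; lra).
          apply Rmult_le_compat_r. left; apply Rinv_0_lt_compat; auto. auto. }
        unfold Rdiv in Gx |- *. lra. }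
      destruct (proj2 Hcov z Xz) as [i [v [E Hv]]].
      exists i, (w ++ v). split. unfold ws'. rewrite E. auto.
      apply (Cyl_app a g f Hset). split; auto.
    - exact Ht'. }
  assert (HglbF : is_glb_R (CS a g f s F) (Ninf a g f s F)).
  { apply Ninf_glb. eauto. apply CS_nonneg. }
  assert (Ninf a g f s F <= t') by (apply (proj1 HglbF); auto).
  assert (HKs : 0 < rpow K s) by (apply rpow_pos; auto).
  assert (Hfin : t * C0 < c / rpow K s * C0) by (apply Rmult_lt_compat_r; auto).
  replace (c / rpow K s * C0) with (c * rpow (diam (Cyl a f w)) s) in Hfin by (unfold C0; field; lra).
  fold F. lra.
Qed.
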